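(* Let $n\ge1$ and $1\le k\le\frac{\ln n}{3}$. Then any deterministic algorithm that sorts $n$ elements in $k$ rounds in the rank query model uses, on its worst-case input, at least $\frac{k}{3e}\,n^{1+1/k}$ queries.
   Context: Rank query model: items $x_1,\ldots,x_n$ whose ranks form an unknown permutation of $\{1,\ldots,n\}$; a query asks ''How is $\mathrm{rank}(x_i)$ compared to $m$?'' with answer ''$<$'', ''$=$'' or ''$>$''; sorting means determining all ranks. An algorithm runs in $k$ rounds if in each of $k$ rounds it submits a set of queries chosen depending only on answers of earlier rounds, then receives all answers. *)

(* Defs.v *)
From mathcomp Require Import all_boot all_order all_algebra all_fingroup.
Set Implicit Arguments. Unset Strict Implicit. Unset Printing Implicit Defensive.
Import Order.TTheory GRing.Theory Num.Theory.

(* A query (i, m) asks "How is rank(x_i) compared to m?"; m is any integer. *)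
Definition query (n : nat) := ('I_n * int)%type.

Inductive answer := ALt | AEq | AGt.

(* The unknown ranks form a permutation: rank(x_i) = (s i) + 1 in {1..n}. *)
Definition rank (n : nat) (s : {perm 'I_n}) (i : 'I_n) : int := Posz (s i).+1.

Definition answer_of (n : nat) (s : {perm 'I_n}) (q : query n) : answer :=
  if (rank s q.1 < q.2)%R then ALt
  else if rank s q.1 == q.2 then AEq else AGt.

(* A deterministic k-round algorithm: given the transcript of all earlier
   rounds (each round = list of (query, answer) pairs), it chooses the set
   (a duplicate-free list) of queries of the next round. *)
Definition strategy (n : nat) := seq (seq (query n * answer)) -> seq (query n).

Fixpoint history (n : nat) (A : strategy n) (s : {perm 'I_n}) (r : nat)
  : seq (seq (query n * answer)) :=
  match r with
  | 0 => [::]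
  | r'.+1 => let h := history A s r' in
             rcons h [seq (q, answer_of s q) | q <- undup (A h)]
  end.

Definition num_queries (n : nat) (A : strategy n) (s : {perm 'I_n}) (k : nat) : nat :=
  \sum_(r < k) size (undup (A (history A s r))).

Definition sorts_in_rounds (n : nat) (A : strategy n) (k : nat) : Prop :=
  forall s1 s2 : {perm 'I_n}, history A s1 k = history A s2 k -> s1 = s2.

(* Main.v *)
Require Import Defs.
From mathcomp Require Import all_boot all_order all_algebra all_fingroup.
From mathcomp Require Import zify.
From HB Require Import structures.
Set Implicit Arguments. Unset Strict Implicit.
Import Order.TTheory GRing.Theory Num.Theory.

Definition ans_eqb (a b : answer) :=
  match a, b with ALt, ALt | AEq, AEq | AGt, AGt => true | _, _ => false end.
Lemma ans_eqP : Equality.axiom ans_eqb.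
Proof. by case; case; constructor. Qed.
HB.instance Definition _ := hasDecEq.Build answer ans_eqP.

Definition cnt n (Q : seq (query n)) (i : 'I_n) :=
  count (fun q : query n => q.1 == i) Q.
Definition ltc n (Q : seq (query n)) (i : 'I_n) (v : int) :=
  count (fun q : query n => (q.1 == i) && (q.2 < v)%R) Q.
Definition hasv n (Q : seq (query n)) (i : 'I_n) (v : int) :=
  has (fun q : query n => (q.1 == i) && (q.2 == v)) Q.

Lemma count_lt (T : eqType) (p1 p2 : pred T) (s : seq T) x :
  (forall y, p1 y -> p2 y) -> x \in s -> p2 x -> ~~ p1 x ->
  count p1 s < count p2 s.
Proof.
move=> sub; elim: s => [//|y s IH]; rewrite inE /= => /orP [/eqP <-|xs] p2x p1x.
  rewrite (negbTE p1x) p2x add0n add1n ltnS.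
  by apply: sub_count.
have := IH xs p2x p1x.
case: (p1 y) (sub y) => [->//|_]; case: (p2 y) => /=; lia.
Qed.

Lemma ltc_le n (Q : seq (query n)) i v : ltc Q i v <= cnt Q i.
Proof. by apply: sub_count => q /andP []. Qed.

Lemma same_answers n (Q : seq (query n)) i (v w : int) :
  ltc Q i v = ltc Q i w -> hasv Q i v = hasv Q i w ->
  forall q, q \in Q -> q.1 = i ->
  ((v < q.2)%R = (w < q.2)%R) /\ ((v == q.2) = (w == q.2)).
Proof.
wlog vw : v w / (v <= w)%R.
  move=> H E1 E2 q qQ qi.
  case: (lerP v w) => [vw|wv]; first exact: H.
  have [H1 H2] := H w v (ltW wv) (esym E1) (esym E2) q qQ qi.
  by split.
move=> E1 E2 q qQ qi.
case: (eqVneq v w) => [->//|nvw].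
have vltw : (v < w)%R by rewrite lt_neqAle nvw.
have nob : forall q', q' \in Q -> q'.1 = i -> ~~ ((v <= q'.2)%R && (q'.2 < w)%R).
  move=> q' q'Q q'i; apply/negP => /andP [a b].
  have : ltc Q i v < ltc Q i w.
    apply: (count_lt (x := q')) => //.
    - move=> y /andP [-> /= yv]; exact: lt_trans yv vltw.
    - by rewrite q'i eqxx.
    - by rewrite q'i eqxx /= -leNgt.
  by rewrite E1 ltnn.
case: (eqVneq q.2 w) => [qw|qnw].
  have : hasv Q i w by apply/hasP; exists q => //; rewrite qi qw !eqxx.
  rewrite -E2 => /hasP [q'' q''Q /andP [/eqP q''i /eqP q''v]].
  have := nob q'' q''Q q''i; rewrite q''v lexx vltw //.
have := nob q qQ qi.
move: vltw qnw; lia.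
Qed.


Definition codeT n (Q : seq (query n)) :=
  {dffun forall i : 'I_n, ('I_(cnt Q i).+1 * bool)%type}.

Definition code n (Q : seq (query n)) (s : {perm 'I_n}) : codeT Q :=
  finfun (fun i => ((inord (ltc Q i (rank s i)) : 'I_(cnt Q i).+1),
                    hasv Q i (rank s i))).

Lemma card_codeT n (Q : seq (query n)) :
  #|codeT Q| = \prod_(i < n) ((cnt Q i).+1 * 2).
Proof.
rewrite /codeT card_dep_ffun.
rewrite foldrE big_image /=.
by apply: eq_bigr => i _; rewrite card_prod card_ord card_bool.
Qed.

Lemma answers_det n (Q : seq (query n)) s1 s2 :
  code Q s1 = code Q s2 ->
  [seq (q, answer_of s1 q) | q <- Q] = [seq (q, answer_of s2 q) | q <- Q].
Proof.
move=> E; apply/eq_in_map => q qQ.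
have := congr1 (fun f : codeT Q => f q.1) E; rewrite /code !ffunE => -[E1 E2].
have E1' : ltc Q q.1 (rank s1 q.1) = ltc Q q.1 (rank s2 q.1).
  have := congr1 val E1; rewrite /= !inordK //; rewrite ltnS; exact: ltc_le.
have [H1 H2] := same_answers E1' E2 qQ erefl.
by rewrite /answer_of H1 H2.
Qed.


Definition W n (A : strategy n) h := \prod_(i < n) ((cnt (undup (A h)) i).+1 * 2).
Definition Pw n (A : strategy n) k s r := \prod_(r <= j < k) W A (history A s j).

Lemma W_gt0 n (A : strategy n) h : 0 < W A h.
Proof. by rewrite /W prodn_gt0 // => i; rewrite muln_gt0. Qed.

Lemma card_fibers (T J : finType) (S : {set T}) (f : T -> J) :
  #|S| = \sum_(j : J) #|[set x in S | f x == j]|.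
Proof.
rewrite -sum1_card (partition_big f xpredT) //=.
by apply: eq_bigr => j _; rewrite -sum1_card; apply: eq_bigl => x; rewrite inE.
Qed.

Lemma key n (A : strategy n) k : sorts_in_rounds A k ->
  forall d, d <= k -> forall h M,
  (forall s, history A s (k - d) = h -> Pw A k s (k - d) <= M) ->
  #|[set s | history A s (k - d) == h]| <= M.
Proof.
move=> Hsort; elim=> [|d IH] dk h M HM.
  rewrite subn0 in HM *.
  case: (set_0Vmem [set s | history A s k == h]) => [->|[s0]]; first by rewrite cards0.
  rewrite inE => /eqP s0h.
  have : [set s | history A s k == h] \subset [set s0].
    apply/subsetP => s; rewrite inE => /eqP sh; rewrite inE; apply/eqP.
    by apply: Hsort; rewrite sh s0h.
  move/subset_leq_card; rewrite cards1 => H1; apply: leq_trans H1 _.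
  by have := HM s0 s0h; rewrite /Pw big_geq.
set r := k - d.+1.
have rk : r < k by rewrite /r; lia.
have r1 : k - d = r.+1 by rewrite /r; lia.
set S := [set s | history A s r == h].
set Q := undup (A h).
have HP : forall s, s \in S -> Pw A k s r.+1 <= M %/ W A h.
  move=> s; rewrite inE => /eqP sh.
  rewrite leq_divRL ?W_gt0 //.
  have := HM s sh; rewrite /Pw big_ltn // sh mulnC //.
rewrite (card_fibers S (code Q)).
apply: (@leq_trans (\sum_(C : codeT Q) (M %/ W A h))).
  apply: leq_sum => C _.
  case: (set_0Vmem [set x in S | code Q x == C]) => [->|[s1]]; first by rewrite cards0.
  rewrite !inE => /andP [s1S /eqP s1C].
  pose h' := history A s1 r.+1.
  apply: (@leq_trans #|[set s | history A s (k - d) == h']|).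
    apply: subset_leq_card; apply/subsetP => s; rewrite !inE => /andP [sS /eqP sC].
    rewrite r1 /h' /=.
    move: sS s1S => /eqP -> /eqP ->.
    by rewrite -/Q (answers_det (s1 := s) (s2 := s1)) // sC s1C.
  apply: IH; first lia.
  move=> s; rewrite r1 /h' /= => E.
  have := rcons_inj E => -[E1 _].
  apply: HP; rewrite inE E1; exact: s1S.
rewrite sum_nat_const.
have -> : #|{: codeT Q}| = W A h by rewrite card_codeT.
rewrite mulnC.
exact: leq_trunc_div.
Qed.


Lemma amgm_nat (I : finType) (F : I -> nat) :
  (\prod_i F i) * #|I| ^ #|I| <= (\sum_i F i) ^ #|I|.
Proof.
have H := (leif_AGM_scaled (R := int) (A := predT) (E := fun i => ((F i)%:R)%R) _).1.
have /H : {in predT, forall i, (0 <= (F i)%:R *+ #|I| :> int)%R}.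
  by move=> i _; rewrite mulrn_wge0.
rewrite -natr_sum -natrX.
move=> H1.
have H2 : (\prod_(i in predT) F i * #|@predT I| ^ #|@predT I| <= (\sum_(i in predT) F i) ^ #|@predT I|)%N.
  rewrite -prod_nat_const -big_split -(ler_nat int) natr_prod; apply: le_trans H1.
  by rewrite le_eqVlt; apply/orP; left; apply/eqP; apply: eq_bigr => i _; rewrite -mulrnA.
exact: H2.
Qed.

Lemma sum_cnt n (Q : seq (query n)) : \sum_(i < n) cnt Q i = size Q.
Proof.
elim: Q => [|q Q IH]; first by rewrite big1.
rewrite /cnt /= big_split /= -/(cnt Q _) IH.
rewrite (bigD1 q.1) //= eqxx big1 ?addn0 ?add1n // => i /negbTE.
by rewrite eq_sym => ->.
Qed.

Lemma Pw_bound n (A : strategy n) k s :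
  Pw A k s 0 * (k * n) ^ (k * n) <= (2 * (num_queries A s k + k * n)) ^ (k * n).
Proof.
pose F (p : 'I_k * 'I_n) := (cnt (undup (A (history A s p.1))) p.2).+1 * 2.
have E1 : Pw A k s 0 = \prod_p F p.
  by rewrite /Pw big_mkord -(pair_bigA _ (fun (j : 'I_k) (i : 'I_n) => F (j, i))).
have E2 : 2 * (num_queries A s k + k * n) = \sum_p F p.
  rewrite -(pair_bigA _ (fun (j : 'I_k) (i : 'I_n) => F (j, i))) /= /num_queries.
  have -> : k * n = \sum_(j < k) n by rewrite sum_nat_const card_ord.
  rewrite -big_split /= big_distrr /=.
  apply: eq_bigr => j _.
  rewrite /F /= -(sum_cnt (undup (A (history A s j)))).
  rewrite -[X in _ + X](card_ord n) -sum1_card -big_split /= big_distrr /=.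
  by apply: eq_bigr => i _; rewrite addn1 mulnC.
have := amgm_nat F.
by rewrite card_prod !card_ord -E1 -E2.
Qed.

Lemma no_small n (A : strategy n) k :
  sorts_in_rounds A k -> ~ (forall s, Pw A k s 0 < n`!).
Proof.
move=> Hs H.
have := key Hs (leqnn k) (h := [::]) (M := n`!.-1).
rewrite subnn.
have -> : [set s | history A s 0 == [::]] = setT by apply/setP => s; rewrite !inE.
rewrite cardsT card_Sn.
have f0 := fact_gt0 n.
move=> H'.
have : n`! <= n`!.-1.
  apply: H' => s _; have := H s; lia.
lia.
Qed.

From Stdlib Require Import Reals Lra Lia Classical.
Unset Implicit Arguments.

Lemma exp_le a b : (a <= b)%R -> (exp a <= exp b)%R.
Proof. move=> H; case: (Rle_lt_or_eq_dec _ _ H) => [h|->]; [apply: Rlt_le; exact: exp_increasing | lra]. Qed.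

Lemma exp_pow_n a m : (exp a ^ m = exp (INR m * a))%R.
Proof.
elim: m => [|m IH]; first by rewrite /= Rmult_0_l exp_0.
rewrite [(exp a ^ _)%R]/= IH S_INR -exp_plus; f_equal; ring.
Qed.

Lemma pow_lt_strict a b m : (0 <= a)%R -> (a < b)%R -> (0 < m)%N -> (a ^ m < b ^ m)%R.
Proof.
move=> ha hab; case: m => [//|m] _ /=.
have h1 : (a ^ m <= b ^ m)%R by apply: pow_incr; lra.
have h2 : (0 < b ^ m)%R by apply: pow_lt; lra.
have h3 : (0 <= a ^ m)%R by apply: pow_le.
nra.
Qed.

Lemma INR_expn m e : INR (expn m e) = (INR m ^ e)%R.
Proof. elim: e => [|e IH]; first by rewrite expn0. by rewrite expnS mult_INR IH. Qed.

Lemma fact_eq m : m`! = Factorial.fact m.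
Proof. elim: m => [//|m IH]; by rewrite factS IH. Qed.

Lemma exp2_ge6 : (6 <= exp 2)%R.
Proof.
have -> : (2 = INR 16 * (1/8))%R.
  rewrite /=; lra.
rewrite -exp_pow_n.
have h : (1 + 1/8 <= exp (1/8))%R by apply: exp_ineq1_le.
have h0 : (0 <= 1 + 1/8 <= exp (1/8))%R by split; lra.
have := pow_incr (1 + 1/8) (exp (1/8)) 16 h0.
have : (6 <= (1 + 1/8) ^ 16)%R by rewrite /=; lra.
lra.
Qed.

Lemma stirling m : (INR m ^ m <= exp (INR m) * INR (Factorial.fact m))%R.
Proof.
elim: m => [|m IH]; first by rewrite /= exp_0; lra.
have key : (INR m.+1 ^ m <= exp 1 * INR m ^ m)%R.
  case: m IH => [|m] IH.
    rewrite /=; have := exp_ineq1_le 1; lra.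
  have hm : (0 < INR m.+1)%R by apply: lt_0_INR; lia.
  have -> : INR m.+2 = (INR m.+1 * (1 + / INR m.+1))%R.
    rewrite (S_INR m.+1); field; lra.
  rewrite Rpow_mult_distr Rmult_comm.
  apply: Rmult_le_compat_r; first by apply: pow_le; lra.
  have -> : exp 1 = (exp (/ INR m.+1) ^ m.+1)%R.
    rewrite exp_pow_n; f_equal; field; lra.
  apply: pow_incr; split; last exact: exp_ineq1_le.
  have : (0 < / INR m.+1)%R by apply: Rinv_0_lt_compat.
  lra.
rewrite [Factorial.fact _]/= plus_INR mult_INR.
change (INR m.+1 ^ m.+1)%R with (INR m.+1 * INR m.+1 ^ m)%R.
have hf : (0 <= INR (Factorial.fact m))%R by apply: pos_INR.
have hm : (0 <= INR m.+1)%R by apply: pos_INR.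
rewrite S_INR exp_plus -S_INR.
have e1 : (0 < exp 1)%R by apply: exp_pos.
have -> : (INR (Factorial.fact m) + INR m * INR (Factorial.fact m) = INR m.+1 * INR (Factorial.fact m))%R.
  rewrite S_INR; ring.
have h2 : (INR m.+1 * INR m.+1 ^ m <= INR m.+1 * (exp 1 * INR m ^ m))%R.
  by apply: Rmult_le_compat_l.
have h3 : (INR m.+1 * (exp 1 * INR m ^ m) <= INR m.+1 * (exp 1 * (exp (INR m) * INR (Factorial.fact m))))%R.
  apply: Rmult_le_compat_l => //; apply: Rmult_le_compat_l; lra.
have -> : (exp (INR m) * exp 1 * (INR m.+1 * INR (Factorial.fact m)) = INR m.+1 * (exp 1 * (exp (INR m) * INR (Factorial.fact m))))%R by ring.
lra.
Qed.

Lemma real_part (n k S : nat) : (1 <= n)%N -> (1 <= k)%N ->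
  (INR k <= ln (INR n) / 3)%R ->
  (INR S < INR k / (3 * exp 1) * Rpower (INR n) (1 + / INR k))%R ->
  (expn (2 * (S + k * n)) (k * n) < n`! * expn (k * n) (k * n))%N.
Proof.
move=> n1 k1 hkn hS.
apply/ssrnat.ltP; apply: INR_lt.
rewrite mult_INR !INR_expn !mult_INR plus_INR mult_INR fact_eq.
have hn : (0 < INR n)%R by apply: lt_0_INR; apply/ssrnat.ltP.
have hk : (1 <= INR k)%R by apply: (le_INR 1); apply/ssrnat.leP.
set E := exp 1.
have hE : (0 < E)%R by apply: exp_pos.
have hE1 : (1 <= E)%R by have := exp_ineq1_le 1; rewrite /E; lra.
set N := (INR k * INR n)%R.
have hN : (0 < N)%R by rewrite /N; nra.
set x := Rpower (INR n) (/ INR k).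
have hx : (6 * E <= x)%R.
  have h3 : (3 <= / INR k * ln (INR n))%R.
    have hik : (0 < / INR k)%R by apply: Rinv_0_lt_compat; lra.
    have -> : (3 = / INR k * (3 * INR k))%R by field; lra.
    apply: Rmult_le_compat_l; lra.
  have := exp_le _ _ h3.
  rewrite -/(Rpower (INR n) (/ INR k)) -/x.
  have -> : (3 = 1 + 2)%R by lra.
  rewrite exp_plus -/E.
  have := exp2_ge6; nra.
have hpx : Rpower (INR n) (1 + / INR k) = (INR n * x)%R.
  by rewrite Rpower_plus Rpower_1.
rewrite hpx in hS.
have hS' : (INR S * (3 * E) < N * x)%R.
  have h3E : (0 < 3 * E)%R by lra.
  have := Rmult_lt_compat_r (3 * E) _ _ h3E hS.
  have -> : (INR k / (3 * E) * (INR n * x) * (3 * E) = N * x)%R.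
    rewrite /N; field; lra.
  done.
have hS0 : (0 <= INR S)%R by apply: pos_INR.
have hlt : (2 * (INR S + N) < N * (x / E))%R.
  apply: (Rmult_lt_reg_r E) => //.
  have -> : (N * (x / E) * E = N * x)%R by field; lra.
  have : (6 * E * N <= x * N)%R by apply: Rmult_le_compat_r; lra.
  nra.
have step1 : ((2 * (INR S + N)) ^ (k * n) < (N * (x / E)) ^ (k * n))%R.
  apply: pow_lt_strict => //; first lra.
  by rewrite muln_gt0; apply/andP.
apply: (Rlt_le_trans _ _ _ step1).
rewrite Rpow_mult_distr Rmult_comm.
apply: Rmult_le_compat_r; first by apply: pow_le; lra.
rewrite pow_mult.
have hx0 : (0 < x)%R by rewrite /x /Rpower; apply: exp_pos.
have hxk : (x ^ k = INR n)%R.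
  rewrite -Rpower_pow // /x Rpower_mult Rinv_l ?Rpower_1 //; lra.
have hk2 : ((x / E) ^ k <= INR n / E)%R.
  rewrite /Rdiv Rpow_mult_distr hxk.
  apply: Rmult_le_compat_l; first lra.
  rewrite pow_inv.
  apply: Rinv_le_contravar => //.
  case: k k1 {hkn hS hk hN N hS' hlt step1 hxk hpx x hx hx0} => [//|k] _.
  rewrite [(E ^ k.+1)%R]/=.
  have := pow_R1_Rle E k hE1; nra.
apply: (Rle_trans _ ((INR n / E) ^ n)).
  apply: pow_incr; split => //.
  apply: pow_le; apply: Rlt_le; apply: Rdiv_lt_0_compat => //.
rewrite /Rdiv Rpow_mult_distr pow_inv.
have hst := stirling n.
have hEn : (E ^ n = exp (INR n))%R by rewrite /E exp_pow_n Rmult_1_r.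
rewrite hEn.
have hen : (0 < exp (INR n))%R by apply: exp_pos.
apply: (Rmult_le_reg_r (exp (INR n))) => //.
rewrite Rmult_assoc Rinv_l; last lra.
lra.
Qed.


Unset Implicit Arguments.

Theorem corollary1 (n k : nat) (A : strategy n) :
  (1 <= n)%N -> (1 <= k)%N -> (INR k <= ln (INR n) / 3)%R ->
  sorts_in_rounds A k ->
  exists s : {perm 'I_n},
    (INR k / (3 * exp 1) * Rpower (INR n) (1 + / INR k)
       <= INR (num_queries A s k))%R.
Proof.
move=> n1 k1 hkn Hs.
apply: NNPP => Hno.
apply: (no_small Hs) => s.
have hlt : (INR (num_queries A s k) < INR k / (3 * exp 1) * Rpower (INR n) (1 + / INR k))%R.
  apply: Rnot_le_lt => H; apply: Hno; exists s; exact: H.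
have h1 := real_part n k _ n1 k1 hkn hlt.
have h2 := @Pw_bound n A k s.
have hX : (0 < expn (k * n) (k * n))%N by rewrite expn_gt0 muln_gt0 k1 n1.
rewrite -(ltn_pmul2r hX).
exact: leq_ltn_trans h2 h1.
Qed.
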